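(* Let $k$ be an algebraically closed field and $G$ a finite abelian group whose order is invertible in $k$. For any finite-dimensional $k$-algebra $\Lambda$ with a $G$-action, there is an isomorphism of algebras $\mathrm{Triv}(\Lambda G)\simeq\mathrm{Triv}(\Lambda)G$.
   Context: A $G$-action on $\Lambda$ is a left action by algebra automorphisms. The skew group algebra $\Lambda G$ is $\Lambda\otimes_k kG$ with multiplication $(\lambda\otimes g)(\mu\otimes h)=\lambda(g\cdot\mu)\otimes gh$. For an algebra $A$, $DA=\mathrm{Hom}_k(A,k)$ with its natural $A$-$A$-bimodule structure, and the trivial extension is $\mathrm{Triv}(A)=A\oplus DA$ with $(a,\phi)(b,\psi)=(ab,a\psi+\phi b)$. $G$ acts on $D\Lambda$ by $(g\cdot\phi)(b)=\phi(g^{-1}\cdot b)$ and on $\mathrm{Triv}(\Lambda)$ by $g\cdot(a,\phi)=(g\cdot a,g\cdot\phi)$; this is an action by algebra automorphisms, so $\mathrm{Triv}(\Lambda)G$ is defined. *)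

(* Defs.v *)
From HB Require Import structures.
From mathcomp Require Import all_boot all_algebra all_fingroup all_field.
Set Implicit Arguments. Unset Strict Implicit. Unset Printing Implicit Defensive.
Import GRing.Theory.
Local Open Scope ring_scope.

Definition is_alg_action (k : fieldType) (gT : finGroupType) (L : falgType k)
    (act : gT -> L -> L) : Prop :=
  [/\ forall g (a : k) (x y : L), act g (a *: x + y) = a *: act g x + act g y,
      forall g (x y : L), act g (x * y) = act g x * act g y,
      forall g, act g 1 = 1,
      forall x, act 1%g x = x
    & forall g h x, act (g * h)%g x = act g (act h x)].

(* Skew group algebra A G, carrier {ffun gT -> A}: x = \sum_g x g (x) g.
   (x * y)(h) = \sum_g x g * (g . y (g^-1 h)), i.e.
   (l (x) g)(m (x) h) = l (g . m) (x) gh. *)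
Definition skew_mul (gT : finGroupType) (A : zmodType) (mulA : A -> A -> A)
    (act : gT -> A -> A) (x y : {ffun gT -> A}) : {ffun gT -> A} :=
  [ffun h => \sum_(g : gT) mulA (x g) (act g (y (g^-1 * h)%g))].

Definition skew_one (gT : finGroupType) (A : zmodType) (oneA : A)
    : {ffun gT -> A} :=
  [ffun g => if g == 1%g then oneA else 0].

Notation dual k A := ('Hom(A, (k : fieldType)^o)).

(* Trivial extension Triv(A) = A (+) DA, carrier A * DA, with
   (a, phi)(b, psi) = (ab, a psi + phi b), where
   (a psi)(x) = psi (x a) and (phi b)(x) = phi (b x). *)
Definition triv_mul (k : fieldType) (A : vectType k) (mulA : A -> A -> A)
    (u v : A * dual k A) : A * dual k A :=
  (mulA u.1 v.1,
   linfun (fun x : A => v.2 (mulA x u.1)) + linfun (fun x : A => u.2 (mulA v.1 x))).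

Definition triv_one (k : fieldType) (A : vectType k) (oneA : A) : A * dual k A :=
  (oneA, 0).

Definition triv_act (k : fieldType) (gT : finGroupType) (L : falgType k)
    (act : gT -> L -> L) (g : gT) (u : L * dual k L) : L * dual k L :=
  (act g u.1, linfun (fun b : L => u.2 (act g^-1%g b))).

Definition TrivSkew (k : fieldType) (gT : finGroupType) (L : falgType k) :=
  ({ffun gT -> L} * dual k {ffun gT -> L})%type.
Definition trivskew_mul (k : fieldType) (gT : finGroupType) (L : falgType k)
    (act : gT -> L -> L) : TrivSkew gT L -> TrivSkew gT L -> TrivSkew gT L :=
  triv_mul (skew_mul (@GRing.mul L) act).
Definition trivskew_one (k : fieldType) (gT : finGroupType) (L : falgType k)
    : TrivSkew gT L := triv_one (skew_one gT (1 : L)).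

Definition SkewTriv (k : fieldType) (gT : finGroupType) (L : falgType k) :=
  {ffun gT -> (L * dual k L)%type}.
Definition skewtriv_mul (k : fieldType) (gT : finGroupType) (L : falgType k)
    (act : gT -> L -> L) : SkewTriv gT L -> SkewTriv gT L -> SkewTriv gT L :=
  skew_mul (triv_mul (@GRing.mul L)) (triv_act act).
Definition skewtriv_one (k : fieldType) (gT : finGroupType) (L : falgType k)
    : SkewTriv gT L := skew_one gT (triv_one (1 : L)).

Definition alg_iso (k : fieldType) (V W : lmodType k)
    (mulV : V -> V -> V) (oneV : V) (mulW : W -> W -> W) (oneW : W)
    (f : V -> W) : Prop :=
  [/\ forall (a : k) (x y : V), f (a *: x + y) = a *: f x + f y,
      bijective f,
      forall x y, f (mulV x y) = mulW (f x) (f y)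
    & f oneV = oneW].

(* Main.v *)
Require Import Defs.
From HB Require Import structures.
From mathcomp Require Import all_boot all_algebra all_fingroup all_field.
Import GRing.Theory.
Local Open Scope ring_scope.

Lemma linfunE' (K : fieldType) (aT rT : vectType K) (f : aT -> rT) :
  (forall a x y, f (a *: x + y) = a *: f x + f y) -> forall x, linfun f x = f x.
Proof.
move=> lf x.
pose F : {linear aT -> rT} := HB.pack f (GRing.isLinear.Build K aT rT *:%R f lf).
exact: (lfunE F x).
Qed.

Lemma linfun_comp (K : fieldType) (U V : vectType K) (psi : 'Hom(V, K^o)) (f : U -> V) :
  (forall a x y, f (a *: x + y) = a *: f x + f y) ->
  forall x, linfun (fun y => psi (f y)) x = psi (f x).
Proof. by move=> lf; apply: linfunE' => a x y; rewrite lf linearP. Qed.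

Lemma fst_sum (I : Type) (r : seq I) (P : pred I) (A B : zmodType) (F : I -> A * B) :
  (\sum_(i <- r | P i) F i).1 = \sum_(i <- r | P i) (F i).1.
Proof. by elim/big_rec2: _ => // i x y _ <-. Qed.
Lemma snd_sum (I : Type) (r : seq I) (P : pred I) (A B : zmodType) (F : I -> A * B) :
  (\sum_(i <- r | P i) F i).2 = \sum_(i <- r | P i) (F i).2.
Proof. by elim/big_rec2: _ => // i x y _ <-. Qed.

Lemma eqVmul (gT : finGroupType) (x y z : gT) : ((x^-1 * y)%g == z) = (x == (y * z^-1)%g).
Proof.
apply/eqP/eqP => [<-|->]; first by rewrite invMg invgK mulKVg.
by rewrite invMg invgK mulgKV.
Qed.

Section S.
Variables (k : fieldType) (gT : finGroupType) (L : falgType k) (act : gT -> L -> L).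
Hypothesis Hact : is_alg_action act.

Lemma actL g a x y : act g (a *: x + y) = a *: act g x + act g y.
Proof. by case: Hact. Qed.
Definition actlin g : {linear L -> L} :=
  HB.pack (act g) (GRing.isLinear.Build k L L *:%R (act g) (actL g)).
Lemma act0 g : act g 0 = 0. Proof. exact: (raddf0 (actlin g)). Qed.
Lemma actM g x y : act g (x * y) = act g x * act g y. Proof. by case: Hact. Qed.
Lemma act_1 x : act 1%g x = x. Proof. by case: Hact. Qed.
Lemma actMg g h x : act (g * h)%g x = act g (act h x). Proof. by case: Hact. Qed.
Lemma actK g x : act g^-1 (act g x) = x. Proof. by rewrite -actMg mulVg act_1. Qed.
Lemma actKV g x : act g (act g^-1 x) = x. Proof. by rewrite -actMg mulgV act_1. Qed.

Definition dlt (g : gT) (l : L) : {ffun gT -> L} := [ffun x => if x == g then l else 0].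
Lemma dltL g a x y : dlt g (a *: x + y) = a *: dlt g x + dlt g y.
Proof. by apply/ffunP => h; rewrite !ffunE; case: eqP; rewrite ?scaler0 ?addr0. Qed.
Lemma sum_dlt (F : gT -> L) : \sum_g dlt g (F g) = [ffun h => F h].
Proof.
apply/ffunP => h; rewrite sum_ffunE ffunE (bigD1 h) //= big1 ?addr0 ?ffunE ?eqxx //.
by move=> i /negbTE ni; rewrite ffunE eq_sym ni.
Qed.

Local Notation sm := (skew_mul (@GRing.mul L) act).

Lemma smLl a x y z : sm (a *: x + y) z = a *: sm x z + sm y z.
Proof.
apply/ffunP => h; rewrite !ffunE scaler_sumr -big_split /=; apply: eq_bigr => g _.
by rewrite !ffunE mulrDl scalerAl.
Qed.
Lemma smLr a x y z : sm z (a *: x + y) = a *: sm z x + sm z y.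
Proof.
apply/ffunP => h; rewrite !ffunE scaler_sumr -big_split /=; apply: eq_bigr => g _.
by rewrite !ffunE actL mulrDr scalerAr.
Qed.
Lemma sm_dltl g m X : sm (dlt g m) X = [ffun h => m * act g (X (g^-1 * h)%g)].
Proof.
apply/ffunP => h; rewrite !ffunE (bigD1 g) //= big1 ?addr0 ?ffunE ?eqxx //.
by move=> i /negbTE ni; rewrite ffunE ni mul0r.
Qed.
Lemma sm_dltr g m Y : sm Y (dlt g m) = [ffun h => Y (h * g^-1)%g * act (h * g^-1)%g m].
Proof.
apply/ffunP => h; rewrite !ffunE (bigD1 (h * g^-1)%g) //= big1 ?addr0 ?ffunE.
  by rewrite eqVmul eqxx.
by move=> i /negbTE ni; rewrite ffunE eqVmul ni act0 mulr0.
Qed.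

Definition theta (Phi : dual k {ffun gT -> L}) (h : gT) : dual k L :=
  linfun (fun mu => Phi (dlt h^-1 (act h^-1 mu))).
Lemma thetaE Phi h mu : theta Phi h mu = Phi (dlt h^-1 (act h^-1 mu)).
Proof. by apply: linfun_comp => a x y; rewrite actL dltL. Qed.
Definition fiso (X : TrivSkew gT L) : SkewTriv gT L := [ffun h => (X.1 h, theta X.2 h)].

Lemma fisoM X Y : fiso (trivskew_mul act X Y) = skewtriv_mul act (fiso X) (fiso Y).
Proof.
case: X => x Phi; case: Y => y Psi.
apply/ffunP => h; rewrite /skewtriv_mul /skew_mul !ffunE /=.
apply: injective_projections; rewrite /=.
  rewrite fst_sum /=; apply: eq_bigr => g _; rewrite !ffunE /=.
  done.
apply/lfunP => mu; rewrite snd_sum sum_lfunE thetaE add_lfunE /=.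
rewrite linfun_comp; last by move=> *; rewrite /= smLl.
rewrite linfun_comp; last by move=> *; rewrite /= smLr.
rewrite sm_dltl sm_dltr.
under eq_bigr => i _ do rewrite add_lfunE.
rewrite big_split /=; congr (_ + _).
  under eq_bigr => i _.
    rewrite linfun_comp; last by move=> a u v; rewrite mulrDl scalerAl.
    rewrite !ffunE /= linfun_comp; last by move=> a u v; rewrite actL.
    rewrite thetaE invMg invgK actMg actKV.
    over.
  rewrite -linear_sum /=; congr (Psi _).
  rewrite (reindex_inj (mulgI h)) /=.
  under eq_bigr => i _ do rewrite mulKg.
  rewrite sum_dlt; apply/ffunP => j; rewrite !ffunE invgK actM.
  done.
under eq_bigr => i _.
  rewrite ffunE /= linfun_comp; last by move=> a u v; rewrite mulrDr scalerAr.
  rewrite thetaE actM actK.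
  over.
rewrite -linear_sum /=; congr (Phi _).
rewrite (reindex_inj invg_inj) /=.
under eq_bigr => i _ do rewrite invgK.
rewrite sum_dlt; apply/ffunP => j; rewrite !ffunE !invgK /=.
by rewrite actMg actKV.
Qed.

Lemma fisoL a X Y : fiso (a *: X + Y) = a *: fiso X + fiso Y.
Proof.
apply/ffunP => h; rewrite !ffunE; apply: injective_projections => /=; rewrite ?ffunE //.
by apply/lfunP => mu; rewrite add_lfunE scale_lfunE !thetaE add_lfunE scale_lfunE.
Qed.

Lemma fiso1 : fiso (trivskew_one gT L) = skewtriv_one gT L.
Proof.
apply/ffunP => h; rewrite !ffunE /=; apply: injective_projections => /=; rewrite ?ffunE.
  by case: eqP.
apply/lfunP => mu; rewrite thetaE !zero_lfunE; case: eqP => _ //=.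
all: symmetry; exact: zero_lfunE.
Qed.

Definition finv (u : SkewTriv gT L) : TrivSkew gT L :=
  ([ffun h => (u h).1], linfun (fun x : {ffun gT -> L} => \sum_h (u h).2 (act h (x h^-1%g)))).

Lemma finvE u x : (finv u).2 x = \sum_h (u h).2 (act h (x h^-1%g)).
Proof.
apply: linfunE' => a v w; rewrite scaler_sumr -big_split /=; apply: eq_bigr => g _.
by rewrite !ffunE actL linearP.
Qed.

Lemma fisoK : cancel fiso finv.
Proof.
case=> x Phi; apply: injective_projections => /=.
  by apply/ffunP => h; rewrite !ffunE.
apply/lfunP => y; rewrite finvE.
under eq_bigr => h _ do rewrite ffunE /= thetaE actK.
rewrite -linear_sum /=; congr (Phi _).
rewrite (reindex_inj invg_inj) /=.
under eq_bigr => i _ do rewrite invgK.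
by rewrite sum_dlt; apply/ffunP => j; rewrite !ffunE.
Qed.

Lemma finvK : cancel finv fiso.
Proof.
move=> u; apply/ffunP => h; rewrite ffunE [RHS]surjective_pairing /=.
apply: injective_projections => /=; first by rewrite ffunE.
apply/lfunP => mu; rewrite thetaE finvE (bigD1 h) //= big1 ?addr0.
  by rewrite ffunE eqxx actKV.
move=> g ng; rewrite ffunE.
case: eqP => [/invg_inj E|_]; first by rewrite E eqxx in ng.
by rewrite act0 linear0.
Qed.

End S.

Theorem proposition1p4 (k : closedFieldType) (gT : finGroupType)
    (L : falgType k) (act : gT -> L -> L) :
  abelian [set: gT] ->
  (#|gT|%:R : k) \is a GRing.unit ->
  is_alg_action act ->
  exists f : TrivSkew gT L -> SkewTriv gT L,
    alg_iso (trivskew_mul act) (trivskew_one gT L)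
            (skewtriv_mul act) (skewtriv_one gT L) f.
Proof.
move=> _ _ H; exists (@fiso _ _ _ act); split.
- exact: fisoL.
- exists (@finv _ _ _ act); [exact: fisoK | exact: finvK].
- exact: fisoM.
- exact: fiso1.
Qed.
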